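(* Let $p$ be an odd prime and $G$ a finite non-abelian $2$-generated $p$-group with cyclic $G'$, with parameters $m,n_1,n_2,o_1,o_2,o'_1,o'_2$ as in the context. Then $\min_{\mathrm{lex}}\{(|b_1{\rm C}_G(G')|,|b_2{\rm C}_G(G')|,-|b_1|,-|b_2|):(b_1,b_2)\in\mathcal{B}\}=(p^{o_1},p^{o_2},-p^{n_1+o'_1},-p^{n_2+o'_2})$.
   Context: Conventions: $[x,y]=x^{-1}y^{-1}xy$, $x^y=y^{-1}xy$. Let $|G'|=p^m$, $G/G'\cong C_{p^{n_1}}\times C_{p^{n_2}}$, $n_1\ge n_2\ge1$. A basis is a pair $(b_1,b_2)$ with $G/G'=\langle b_1G'\rangle\times\langle b_2G'\rangle$ and $|b_iG'|=p^{n_i}$; $\mathcal{B}$ is the set of bases. For $g\in G$, $p^{o(g)}=|g{\rm C}_G(G')|$ (order in $G/{\rm C}_G(G')$). $(o_1,o_2)=\min_{\mathrm{lex}}\{(o(b_1),o(b_2)):(b_1,b_2)\in\mathcal{B}\}$; $r_1=1+p^{m-o_1}$; $r_2=1+p^{m-o_2}$ if $o_2>o_1$, else $r_2=r_1^{p^{o_1-o_2}}$. $\mathcal{B}_r$ is the (nonempty) set of bases with $x^{b_i}=x^{r_i}$ for all $x\in G'$, $i=1,2$. For $b\in\mathcal{B}$, $o'_i(b)$ is defined by $|b_i|=p^{n_i+o'_i(b)}$, and $(o'_1,o'_2)=\max_{\mathrm{lex}}\{(o'_1(b),o'_2(b)):b\in\mathcal{B}_r\}$. *)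

(* Defs.v *)
From mathcomp Require Import all_boot all_order all_algebra all_fingroup all_solvable.
Set Implicit Arguments. Unset Strict Implicit. Unset Printing Implicit Defensive.
Import GroupScope.

Section Defs.
Variables (gT : finGroupType) (G : {group gT}) (p m n1 n2 : nat).

Definition Gder : {group gT} := (G^`(1))%G.
Definition CGder : {group gT} := ('C_G(G^`(1)))%G.

Definition is_basis (b : gT * gT) : bool :=
  [&& b.1 \in G, b.2 \in G,
      (<[coset Gder b.1]> \x <[coset Gder b.2]>) == (G / Gder),
      #[coset Gder b.1] == (p ^ n1)%N & #[coset Gder b.2] == (p ^ n2)%N].

Definition oC (g : gT) : nat := logn p #[coset CGder g].

(* (o1,o2) = lex-min of (o(b1),o(b2)) over bases (B is nonempty; the
   default value #|gT| of the empty minimum is never used) *)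
Definition o1 : nat := \big[minn/#|gT|]_(b | is_basis b) oC b.1.
Definition o2 : nat :=
  \big[minn/#|gT|]_(b | is_basis b && (oC b.1 == o1)) oC b.2.

Definition r1 : nat := (1 + p ^ (m - o1))%N.
Definition r2 : nat := (if o1 < o2 then 1 + p ^ (m - o2) else r1 ^ (p ^ (o1 - o2)))%N.

Definition in_Br (b : gT * gT) : bool :=
  is_basis b &&
  [forall x in Gder, (x ^ b.1 == x ^+ r1) && (x ^ b.2 == x ^+ r2)].

Definition o'1b (b : gT * gT) : nat := (logn p #[b.1] - n1)%N.
Definition o'2b (b : gT * gT) : nat := (logn p #[b.2] - n2)%N.

Definition o'1 : nat := \max_(b | in_Br b) o'1b b.
Definition o'2 : nat := \max_(b | in_Br b && (o'1b b == o'1)) o'2b b.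

End Defs.

Fixpoint lexle (s t : seq int) : bool :=
  match s, t with
  | x :: s', y :: t' => ((x < y)%R) || ((x == y) && lexle s' t')
  | _, _ => true
  end.

Definition is_lexmin (T : Type) (P : T -> bool) (f : T -> seq int) (v : seq int) : Prop :=
  (exists2 b, P b & f b = v) /\ (forall b, P b -> lexle v (f b)).

(* Main.v *)
Require Import Defs.
From mathcomp Require Import all_boot all_order all_algebra all_fingroup all_solvable.
From mathcomp Require Import zify ring.
Set Implicit Arguments. Unset Strict Implicit. Unset Printing Implicit Defensive.


Lemma lte_step p b k : prime p -> odd p -> 0 < b ->
  exists k', k' = k %[mod p] /\ (1 + k * p ^ b) ^ p = 1 + k' * p ^ b.+1.
Proof.
move=> pp op b0; have p_gt1 := prime_gt1 pp.
have p3 : 2 < p by case: p pp op p_gt1 => [|[|[|]]].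
set x := k * p ^ b.
have hs: p ^ b.+2 %| \sum_(i < p.-1) 'C(p, i.+2) * (1 ^ (p - i.+2) * x ^ i.+2).
  apply: dvdn_sum => -[i _] _ /=; rewrite exp1n mul1n /x expnMn -expnM.
  rewrite mulnCA; apply: dvdn_mull.
  case: i => [|i].
    rewrite expnS; apply: dvdn_mul; first by apply: prime_dvd_bin => //; lia.
    by apply: dvdn_exp2l; lia.
  by apply: dvdn_mull; apply: dvdn_exp2l; nia.
case/dvdnP: hs => t ht.
exists (k + t * p); split; first by rewrite -modnDm modnMl addn0 modn_mod.
rewrite expnDn -(prednK (prime_gt0 pp)) 2!big_ord_recl /= prednK ?prime_gt0 //.
have -> : \sum_(i < p.-1) 'C(p, bump 0 (bump 0 i)) * (1 ^ (p - bump 0 (bump 0 i)) * x ^ bump 0 (bump 0 i)) = t * p ^ b.+2.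
  by rewrite -ht; apply: eq_bigr => i _.
rewrite /bump /= bin0 bin1 !exp1n expn0 expn1 /x !expnS; ring.
Qed.

Lemma lte p a e : prime p -> odd p -> 0 < a ->
  exists k, k = 1 %[mod p] /\ (1 + p ^ a) ^ (p ^ e) = 1 + k * p ^ (a + e).
Proof.
move=> pp op a0; elim: e => [|e [k [k1 IH]]].
  by exists 1; rewrite addn0 expn0 expn1 mul1n.
have [k' [k'k Hk]] := lte_step k pp op (ltn_addr e a0).
exists k'; split; first by rewrite k'k.
by rewrite expnSr expnM IH Hk -addnS.
Qed.

Module LexAux.
Import Order.TTheory GRing.Theory Num.Theory.
Lemma lexle4 (x1 x2 x3 x4 y1 y2 y3 y4 : nat) :
  (x1 < y1) || ((x1 == y1) && ((x2 < y2) || ((x2 == y2) &&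
     ((y3 < x3) || ((y3 == x3) && (y4 <= x4)))))) ->
  lexle [:: Posz x1; Posz x2; (- Posz x3)%R; (- Posz x4)%R]
        [:: Posz y1; Posz y2; (- Posz y3)%R; (- Posz y4)%R].
Proof.
rewrite /= !ltz_nat !eqz_nat !ltrN2 !eqr_opp !ltz_nat !eqz_nat andbT.
by rewrite (eq_sym x3) (eq_sym x4) [(y4 < x4) || _]orbC -leq_eqVlt.
Qed.
End LexAux.

Import GroupScope.

Lemma aut_pow (gT : finGroupType) (D : {group gT}) (p r : nat) :
  p.-group D -> cyclic D -> D :!=: 1 -> coprime p r ->
  exists2 t, t \in Aut D & {in D, forall x, t x = x ^+ r}.
Proof.
move=> pD cD ntD cpr.
have [pp pdvd [k oD]] := pgroup_pdiv pD ntD.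
have [mm [[def_m _ [_ im_m] _ _] _ _]] := cyclic_pgroup_Aut_structure pD cD ntD.
have q_gt1 : 1 < #|D| by rewrite cardG_gt1.
have u : ((r%:R)%R : 'Z_#|D|) \is a GRing.unit.
  by rewrite unitZpE // oD coprime_pexpl.
rewrite -im_m in u; case/imageP: u => a Aa def_a.
exists a => // x Dx; rewrite -def_m // -def_a val_Zp_nat //.
by rewrite expg_mod // expg_cardG.
Qed.

Lemma aut_pow_iter (gT : finGroupType) (D : {group gT}) (t : {perm gT}) r :
  {in D, forall x, t x = x ^+ r} -> forall k, {in D, forall x, (t ^+ k) x = x ^+ (r ^ k)%N}.
Proof.
move=> tr k x Dx; rewrite permX; elim: k => [|k IH]; first by rewrite expn0 expg1.
by rewrite iterS IH tr ?groupX // -expgM expnSr.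
Qed.

Lemma aut_pow_order (gT : finGroupType) (D : {group gT}) (t : {perm gT}) r g k :
  t \in Aut D -> {in D, forall x, t x = x ^+ r} -> D :=: <[g]> ->
  (#[t] %| k) = (r ^ k == 1 %[mod #|D|])%N.
Proof.
move=> At tr defD; rewrite order_dvdn defD -orderE -(eq_expg_mod_order g _ 1) expg1.
have Dg : g \in D by rewrite defD cycle_id.
apply/eqP/eqP => [H1 | H].
  by rewrite -(aut_pow_iter tr) // H1 perm1.
apply: (eq_Aut (groupX k At) (group1 _)) => x; rewrite defD perm1.
case/cycleP => i ->; rewrite (aut_pow_iter tr) ?defD ?groupX ?cycle_id //.
by rewrite -expgM mulnC expgM H.
Qed.

Lemma aut_order_pa (gT : finGroupType) (D : {group gT}) (t : {perm gT}) (p m a : nat) g :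
  prime p -> odd p -> 0 < a -> a <= m -> #|D| = (p ^ m)%N -> D :=: <[g]> ->
  t \in Aut D -> {in D, forall x, t x = x ^+ (1 + p ^ a)} ->
  #[t] = (p ^ (m - a))%N.
Proof.
move=> pp op a0 am oD defD At tr.
have p1 := prime_gt1 pp.
have ho k := aut_pow_order k At tr defD.
have [k [k1 hk]] := lte (m - a) pp op a0.
have: #[t] %| p ^ (m - a).
  by rewrite ho hk subnKC // oD -modnDm modnMl addn0 modn_mod.
case/dvdn_pfactor => // d dle od; rewrite od; apply/eqP; rewrite eqn_exp2l //.
rewrite eqn_leq dle /=; apply/negP => /negP; rewrite -ltnNge => dlt.
have: #[t] %| p ^ (m - a).-1 by rewrite od dvdn_exp2l //; lia.
have [k' [k'1 hk']] := lte (m - a).-1 pp op a0.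
rewrite ho hk' oD.
have -> : (a + (m - a).-1 = m.-1)%N by lia.
rewrite -{1}[1%N]add0n eqn_modDl.
have m0 : 0 < m by lia.
rewrite -(prednK m0) expnS mod0n => /dvdnP [c] hc.
move: k'1; have : p %| k'.
  have pm0 : 0 < p ^ m.-1 by rewrite expn_gt0 prime_gt0.
  by apply/dvdnP; exists c; apply/eqP; rewrite -(eqn_pmul2r pm0) hc; apply/eqP; ring.
move=> /dvdnP [e ->]; rewrite modnMl modn_small //.
Qed.

Lemma key (gT : finGroupType) (D : {group gT}) (p : nat) (a t : {perm gT}) :
  p.-group D -> cyclic D -> D :!=: 1 -> odd p -> a \in Aut D -> t \in Aut D ->
  p.-elt a -> #[a] = #[t] -> exists j, coprime p j /\ a ^+ j = t.
Proof.
move=> pD cD ntD op Aa At pa oat.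
have [mm [_ [_ cF _ _] hA]] := cyclic_pgroup_Aut_structure pD cD ntD.
have cA : cyclic (Aut D).
  move: hA; case: ifP => _; first by move=> ->.
  by case=> t0 [_ _ _]; rewrite op; case; case.
have [a1 | an1] := eqVneq #[a] 1%N.
  exists 1%N; split; first exact: coprimen1.
  move/eqP: (a1); rewrite order_eq1 => /eqP ->.
  by move: a1; rewrite oat => /eqP; rewrite order_eq1 => /eqP ->; rewrite expg1.
have eqc : <[a]> = <[t]>.
  apply/eqP; rewrite (eq_subG_cyclic cA) ?cycle_subG // -!orderE oat //.
have : t \in <[a]> by rewrite eqc cycle_id.
case/cycleP => j tj; exists j; split => //.
have : generator <[a]> (a ^+ j) by rewrite /generator -tj eqc.
rewrite generator_coprime; apply: coprime_dvdl.
have [k ok] := p_natP pa.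
rewrite ok; case: k ok => [|k] ok; first by rewrite ok in an1.
exact: dvdn_exp.
Qed.

Lemma pelt_pow (gT : finGroupType) (x : gT) (p j : nat) :
  prime p -> p.-elt x -> coprime p j -> <[x ^+ j]> = <[x]> /\ #[x ^+ j] = #[x].
Proof.
move=> pp px cpj.
have cxj : coprime #[x] j.
  have [k ok] := p_natP px; rewrite ok.
  by case: k {ok} => [|k]; [exact: coprime1n | rewrite coprime_pexpl].
have : generator <[x]> (x ^+ j) by rewrite generator_coprime.
by rewrite /generator => /eqP e; rewrite -e; split => //; rewrite !orderE e.
Qed.

Lemma bigmin_arg (I : finType) (P : pred I) (F : I -> nat) idx :
  (exists i, P i) -> (forall i, P i -> F i <= idx) ->
  (exists2 i, P i & \big[minn/idx]_(i | P i) F i = F i) /\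
  (forall i, P i -> \big[minn/idx]_(i | P i) F i <= F i).
Proof.
move=> [i0 Pi0] hb.
have le_i : forall i, P i -> \big[minn/idx]_(i | P i) F i <= F i.
  move=> i Pi; have : i \in index_enum I by rewrite mem_index_enum.
  elim: (index_enum I) => // j r IH; rewrite inE big_cons.
  case/predU1P => [<-|ir]; first by rewrite Pi geq_minl.
  by case: (P j); [rewrite geq_min IH ?orbT | exact: IH].
split => //.
case: (arg_minnP F Pi0) => i Pi imin; exists i => //.
apply/eqP; rewrite eqn_leq le_i //=.
apply: (big_ind (fun x => F i <= x)) => //; first exact: hb.
by move=> x y hx hy; rewrite leq_min hx hy.
Qed.

Lemma pelt_logn (gT : finGroupType) (x : gT) p : prime p -> p.-elt x ->
  #[x] = (p ^ logn p #[x])%N.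
Proof. by move=> pp px; have [k ->] := p_natP px; rewrite pfactorK. Qed.

Lemma conj_aut_in (gT : finGroupType) (G : {group gT}) b : b \in G ->
  conj_aut G^`(1) b \in Aut G^`(1).
Proof.
move=> Gb; apply: (subsetP (Aut_conj_aut _ G)).
by apply: mem_morphim => //; apply: (subsetP (der_norm 1 G)).
Qed.

Lemma coset_conj_order (gT : finGroupType) (G : {group gT}) b : b \in G ->
  #[coset (CGder G) b] = #[conj_aut G^`(1) b].
Proof.
move=> Gb.
have nD : b \in 'N(G^`(1)) := subsetP (der_norm 1 G) b Gb.
have nC : b \in 'N(CGder G).
  by apply: (subsetP (subcent_norm G G^`(1))); rewrite inE Gb.
suff H : forall k, (#[coset (CGder G) b] %| k) = (#[conj_aut G^`(1) b] %| k).
  by apply/eqP; rewrite eqn_dvd H dvdnn -H dvdnn.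
move=> k; rewrite !order_dvdn -!morphX //.
have e1 : (coset (CGder G) (b ^+ k) == 1) = (b ^+ k \in CGder G).
  by apply/eqP/idP => [/(coset_idr (groupX k nC)) | /coset_id].
have e2 : (conj_aut G^`(1) (b ^+ k) == 1) = (b ^+ k \in 'C(G^`(1))).
  by rewrite -ker_conj_aut; apply/eqP/(kerP _ (groupX k nD)).
by rewrite e1 e2 /CGder /= inE groupX.
Qed.

Lemma basis_pow (gT : finGroupType) (G : {group gT}) p n1 n2 (b : gT * gT) j1 j2 :
  prime p -> p.-group G -> is_basis G p n1 n2 b -> coprime p j1 -> coprime p j2 ->
  [/\ is_basis G p n1 n2 (b.1 ^+ j1, b.2 ^+ j2), #[b.1 ^+ j1] = #[b.1]
    & #[b.2 ^+ j2] = #[b.2]].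
Proof.
move=> pp pG /and5P [G1 G2 hd o1 o2] c1 c2.
have nD x : x \in G -> x \in 'N(Gder G) by move=> Gx; apply: (subsetP (der_norm 1 G)).
have pq x : x \in G -> p.-elt (coset (Gder G) x).
  by move=> Gx; apply: (mem_p_elt (quotient_pgroup _ pG)); apply: mem_quotient.
have [e1 f1] := pelt_pow pp (pq _ G1) c1.
have [e2 f2] := pelt_pow pp (pq _ G2) c2.
have [_ g1] := pelt_pow pp (mem_p_elt pG G1) c1.
have [_ g2] := pelt_pow pp (mem_p_elt pG G2) c2.
split => //; apply/and5P; split; rewrite /= ?groupX //.
- by rewrite !morphX ?nD // e1 e2.
- by rewrite morphX ?nD // f1.
- by rewrite morphX ?nD // f2.
Qed.

Unset Implicit Arguments.
Unset Strict Implicit.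

Theorem lemma3p4 (p : nat) (gT : finGroupType) (G : {group gT}) (m n1 n2 : nat) :
  prime p -> odd p -> p.-group G -> ~~ abelian G ->
  (exists x y : gT, G :=: <<[set x; y]>>) ->
  cyclic G^`(1) ->
  #|G^`(1)| = (p ^ m)%N ->
  abelian_type (G / G^`(1)) = [:: (p ^ n1)%N; (p ^ n2)%N] ->
  (n2 <= n1)%N -> (1 <= n2)%N ->
  is_lexmin (is_basis G p n1 n2)
    (fun b => [:: Posz #[coset (CGder G) b.1]; Posz #[coset (CGder G) b.2];
                  (- Posz #[b.1])%R; (- Posz #[b.2])%R])
    [:: Posz (p ^ o1 G p n1 n2)%N; Posz (p ^ o2 G p n1 n2)%N;
        (- Posz (p ^ (n1 + o'1 G p m n1 n2))%N)%R;
        (- Posz (p ^ (n2 + o'2 G p m n1 n2))%N)%R].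
Proof.
move=> pp op pG nabG _ cD oD atype _ _.
have p1 := prime_gt1 pp.
have ntD : G^`(1) != 1 :> {set gT}.
  by apply/eqP => h; move/negP: nabG; apply; apply/derG1P.
have pD : p.-group G^`(1) := pgroupS (der_sub 1 G) pG.
have [g defD] := cyclicP cD.
have m0 : 0 < m.
  case: m oD => // oD; move: ntD; rewrite -cardG_gt1 oD //.
have nD b : b \in G -> b \in 'N(G^`(1)) by move=> Gb; apply: (subsetP (der_norm 1 G)).
have nC b : b \in G -> b \in 'N(CGder G).
  by move=> Gb; apply: (subsetP (subcent_norm G G^`(1))); rewrite inE Gb nD.
have pcoset b : b \in G -> #[coset (CGder G) b] = (p ^ oC G p b)%N.
  move=> Gb; apply: pelt_logn => //.
  by apply: (mem_p_elt (quotient_pgroup _ pG)); apply: mem_quotient.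
have pconj b : b \in G -> p.-elt (conj_aut G^`(1) b).
  by move=> Gb; apply: morph_p_elt (nD _ Gb) (mem_p_elt pG Gb).
have oconj b : b \in G -> #[conj_aut G^`(1) b] = (p ^ oC G p b)%N.
  by move=> Gb; rewrite -coset_conj_order // pcoset.
have [bw Bw] : exists bw, is_basis G p n1 n2 bw.
  have ab : abelian (G / G^`(1)) by have := der_abelian 0 G; rewrite derg0.
  case: (abelian_structure ab) => bs hbs; rewrite atype.
  case: bs hbs => [|c1 [|c2 [|c3 bs]]] //= hbs [o1' o2'].
  rewrite !big_cons big_nil dprodg1 in hbs.
  have /dprodP[_ defq _ _] := hbs.
  have c1G : c1 \in G / G^`(1).
    by rewrite -defq; apply: (subsetP (mulG_subl _ _)); apply: cycle_id.
  have c2G : c2 \in G / G^`(1).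
    by rewrite -defq; apply: (subsetP (mulG_subr _ _)); apply: cycle_id.
  case/morphimP: c1G => x1 Nx1 Gx1 def1.
  case/morphimP: c2G => x2 Nx2 Gx2 def2.
  exists (x1, x2); rewrite /is_basis /= Gx1 Gx2 /= -def1 -def2 o1' o2' !eqxx !andbT.
  by apply/eqP.
have oCle b : b \in G -> oC G p b <= #|gT|.
  move=> Gb; rewrite /oC.
  have h1 : logn p #[coset (CGder G) b] <= logn p #[b].
    by apply: dvdn_leq_log; [exact: order_gt0 | exact: (morph_order _ (nC _ Gb))].
  have h2 := ltn_expl (logn p #[b]) p1.
  have h3 := dvdn_leq (order_gt0 b) (pfactor_dvdnn p #[b]).
  have h4 : #[b] <= #|gT| by rewrite orderE max_card.
  lia.
have oCm b : b \in G -> oC G p b <= m.-1.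
  move=> Gb; have := order_dvdG (conj_aut_in Gb).
  rewrite card_Aut_cyclic // oD totient_pfactor // oconj //.
  have cop : coprime (p ^ oC G p b) p.-1.
    case: (oC G p b) => [|k]; first exact: coprime1n.
    by rewrite coprime_pexpl // coprimenP // prime_gt0.
  by rewrite Gauss_dvdr // dvdn_Pexp2l.
have Bw_in b : is_basis G p n1 n2 b -> b.1 \in G /\ b.2 \in G.
  by case/and5P.
have [[b1w Pb1w eo1] mino1] := bigmin_arg (P := is_basis G p n1 n2)
   (F := fun b => oC G p b.1) (idx := #|gT|) (ex_intro _ bw Bw)
   (fun b Pb => oCle _ (proj1 (Bw_in b Pb))).
have eo1' : o1 G p n1 n2 = oC G p b1w.1 by rewrite /o1 eo1.
have Pw2 : is_basis G p n1 n2 b1w && (oC G p b1w.1 == o1 G p n1 n2).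
  by rewrite Pb1w eo1' eqxx.
have [[b0 /andP [Pb0 /eqP e01] e02] mino2] := bigmin_arg
   (P := fun b => is_basis G p n1 n2 b && (oC G p b.1 == o1 G p n1 n2))
   (F := fun b => oC G p b.2) (idx := #|gT|) (ex_intro _ b1w Pw2)
   (fun b Pb => oCle _ (proj2 (Bw_in b (proj1 (andP Pb))))).
have eo2' : o2 G p n1 n2 = oC G p b0.2 by rewrite /o2 e02.
have mino1' b : is_basis G p n1 n2 b -> o1 G p n1 n2 <= oC G p b.1.
  by move=> Pb; rewrite eo1' -eo1; apply: mino1.
have mino2' b : is_basis G p n1 n2 b -> oC G p b.1 = o1 G p n1 n2 ->
    o2 G p n1 n2 <= oC G p b.2.
  by move=> Pb eb; rewrite eo2' -e02; apply: mino2; rewrite Pb eb eqxx.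
have [G01 G02] := Bw_in _ Pb0.
have mk_tau o b : b \in G -> oC G p b = o -> exists2 t, t \in Aut G^`(1) &
    {in G^`(1), forall x, t x = x ^+ (1 + p ^ (m - o))} /\ #[t] = (p ^ o)%N.
  move=> Gb eo; have om := oCm _ Gb; rewrite eo in om.
  have hom : o < m by apply: leq_ltn_trans om _; rewrite ltn_predL.
  have a0 : 0 < m - o by rewrite subn_gt0.
  have cop : coprime p (1 + p ^ (m - o)).
    rewrite -coprime_modr -modnDm -(prednK a0) expnS modnMr addn0 modn_mod.
    by rewrite modn_small // coprimen1.
  have [t At tr] := aut_pow pD cD ntD cop.
  exists t => //; split => //.
  rewrite (aut_order_pa pp op a0 (leq_subr _ _) oD defD At tr) subKn //; exact: ltnW.
have [t1 At1 [tr1 ot1]] := mk_tau _ _ G01 e01.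
have [t2 At2 [tr2 ot2]] : exists2 t, t \in Aut G^`(1) &
    {in G^`(1), forall x, t x = x ^+ Defs.r2 G p m n1 n2} /\ #[t] = (p ^ o2 G p n1 n2)%N.
  rewrite /Defs.r2; case: ltnP => h.
    exact: mk_tau _ _ G02 (esym eo2').
  exists (t1 ^+ (p ^ (o1 G p n1 n2 - o2 G p n1 n2))); first exact: groupX.
  split; first by move=> x Dx; rewrite (aut_pow_iter tr1 _ Dx).
  rewrite orderXdiv ot1 ?dvdn_exp2l ?leq_subr //.
  by rewrite -{1}(subnK h) expnD mulKn // expn_gt0 prime_gt0.
have conjE b x : b \in G -> x \in G^`(1) -> conj_aut G^`(1) b x = x ^ b.
  by move=> Gb Dx; apply: norm_conj_autE (nD _ Gb) Dx.
have Br_o b : in_Br G p m n1 n2 b ->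
    [/\ is_basis G p n1 n2 b, oC G p b.1 = o1 G p n1 n2 & oC G p b.2 = o2 G p n1 n2].
  case/andP => Pb /forallP hf; have [Gb1 Gb2] := Bw_in _ Pb.
  have c1 : conj_aut G^`(1) b.1 = t1.
    apply: (eq_Aut (conj_aut_in Gb1) At1) => x Dx.
    have /andP [/eqP e1 _] := implyP (hf x) Dx.
    by rewrite conjE // e1 tr1.
  have c2 : conj_aut G^`(1) b.2 = t2.
    apply: (eq_Aut (conj_aut_in Gb2) At2) => x Dx.
    have /andP [_ /eqP e2] := implyP (hf x) Dx.
    by rewrite conjE // e2 tr2.
  split => //; apply/eqP; rewrite -(eqn_exp2l _ _ p1) -pcoset // coset_conj_order //.
    by rewrite c1 ot1.
  by rewrite c2 ot2.
have Opt b : is_basis G p n1 n2 b -> oC G p b.1 = o1 G p n1 n2 ->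
    oC G p b.2 = o2 G p n1 n2 ->
    exists b', [/\ in_Br G p m n1 n2 b', #[b'.1] = #[b.1] & #[b'.2] = #[b.2]].
  move=> Pb e1 e2; have [Gb1 Gb2] := Bw_in _ Pb.
  have [j1 [cj1 hj1]] := key pD cD ntD op (conj_aut_in Gb1) At1 (pconj _ Gb1)
     (etrans (oconj _ Gb1) (etrans (congr1 (expn p) e1) (esym ot1))).
  have [j2 [cj2 hj2]] := key pD cD ntD op (conj_aut_in Gb2) At2 (pconj _ Gb2)
     (etrans (oconj _ Gb2) (etrans (congr1 (expn p) e2) (esym ot2))).
  have [Pb' f1 f2] := basis_pow pp pG Pb cj1 cj2.
  exists (b.1 ^+ j1, b.2 ^+ j2); split => //.
  rewrite /in_Br Pb' /=; apply/forallP => x; apply/implyP => Dx.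
  apply/andP; split; apply/eqP.
    by rewrite -conjE ?groupX // morphX ?nD // hj1 tr1.
  by rewrite -conjE ?groupX // morphX ?nD // hj2 tr2.
have [bb [Brb _ _]] := Opt b0 Pb0 e01 (esym eo2').
have [bA BrA eA] : exists2 bA, in_Br G p m n1 n2 bA & o'1b p n1 bA = o'1 G p m n1 n2.
  set a := [arg max_(i > bb | in_Br G p m n1 n2 i) o'1b p n1 i].
  exists a; first by rewrite /a; case: arg_maxnP.
  by rewrite /o'1 (bigmax_eq_arg _ Brb).
have maxA b : in_Br G p m n1 n2 b -> o'1b p n1 b <= o'1 G p m n1 n2.
  by move=> Bb; rewrite /o'1; apply: leq_bigmax_cond.
have BrA2 : in_Br G p m n1 n2 bA && (o'1b p n1 bA == o'1 G p m n1 n2).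
  by rewrite BrA eA eqxx.
have [bS /andP [BrS /eqP eS1] eS2] : exists2 bS,
    in_Br G p m n1 n2 bS && (o'1b p n1 bS == o'1 G p m n1 n2) &
    o'2b p n2 bS = o'2 G p m n1 n2.
  set a := [arg max_(i > bA | in_Br G p m n1 n2 i && (o'1b p n1 i == o'1 G p m n1 n2))
              o'2b p n2 i].
  exists a; first by rewrite /a; case: arg_maxnP.
  by rewrite /o'2 (@bigmax_eq_arg _ bA (fun i => in_Br G p m n1 n2 i && (o'1b p n1 i == o'1 G p m n1 n2)) _ BrA2).
have maxB b : in_Br G p m n1 n2 b -> o'1b p n1 b = o'1 G p m n1 n2 ->
    o'2b p n2 b <= o'2 G p m n1 n2.
  by move=> Bb eb; rewrite /o'2; apply: leq_bigmax_cond; rewrite Bb eb eqxx.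
have ordb b : is_basis G p n1 n2 b ->
    #[b.1] = (p ^ (n1 + o'1b p n1 b))%N /\ #[b.2] = (p ^ (n2 + o'2b p n2 b))%N.
  case/and5P => Gb1 Gb2 _ /eqP c1 /eqP c2.
  have d1 : (p ^ n1 %| #[b.1])%N by rewrite -c1; apply: morph_order (nD _ Gb1).
  have d2 : (p ^ n2 %| #[b.2])%N by rewrite -c2; apply: morph_order (nD _ Gb2).
  have e1 := pelt_logn pp (mem_p_elt pG Gb1).
  have e2 := pelt_logn pp (mem_p_elt pG Gb2).
  rewrite e1 dvdn_Pexp2l // in d1; rewrite e2 dvdn_Pexp2l // in d2.
  by rewrite /o'1b /o'2b !subnKC.
rewrite /is_lexmin; split.
  have [Pb e1 e2] := Br_o _ BrS; have [Gs1 Gs2] := Bw_in _ Pb.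
  have [h1 h2] := ordb _ Pb.
  by exists bS => //=; rewrite !pcoset // e1 e2 h1 h2 eS1 eS2.
move=> b Pb; have [Gb1 Gb2] := Bw_in _ Pb; rewrite /= !pcoset //; apply: LexAux.lexle4.
have h1 := mino1' _ Pb; rewrite leq_eqVlt in h1.
case/orP: h1 => [/eqP e1 | lt1]; last by rewrite ltn_exp2l ?lt1.
rewrite e1 eqxx ltnn /=.
have h2 := mino2' _ Pb (esym e1); rewrite leq_eqVlt in h2.
case/orP: h2 => [/eqP e2 | lt2]; last by rewrite ltn_exp2l ?lt2.
rewrite e2 eqxx ltnn /=.
have [b' [Bb' f1 f2]] := Opt b Pb (esym e1) (esym e2).
have [Pb' _ _] := Br_o _ Bb'.
have [g1 g2] := ordb _ Pb'.
rewrite -f1 -f2 g1 g2.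
have h3 := maxA _ Bb'; rewrite leq_eqVlt in h3.
case/orP: h3 => [/eqP e3 | lt3]; last by rewrite ltn_exp2l ?ltn_add2l ?lt3.
rewrite e3 eqxx ltnn /= leq_exp2l // leq_add2l.
exact: maxB.
Qed.
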